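(* Let $\mu$ be a probability measure on $\mathbb{R}$ with density $p$ that is locally absolutely continuous on $\mathbb{R}$, satisfies $p(x)=p(-x)$ for all $x$, $p'(x)\le0$ for almost every $x>0$, and $\lim_{x\to\infty}p(x)\log x=0$. Then $\operatorname{Re}G_\mu(x+yi)>0$ for all $x>0$, $y>0$.
   Context: $G_\mu(z)=\int_{\mathbb{R}}\frac{1}{z-u}\mu(du)$ for $z\in\mathbb{C}^+$ is the Cauchy transform of $\mu$. *)

(* Defs.v *)
From Stdlib Require Import Reals Lra.
Open Scope R_scope.

Definition abs_cont_on (f : R -> R) (a b : R) : Prop :=
  forall eps, 0 < eps -> exists delta, 0 < delta /\
    forall (n : nat) (c d : nat -> R),
      (forall i, (i <= n)%nat -> a <= c i /\ c i <= d i /\ d i <= b) ->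
      (forall i j, (i <= n)%nat -> (j <= n)%nat -> i <> j ->
          d i <= c j \/ d j <= c i) ->
      sum_f_R0 (fun i => d i - c i) n < delta ->
      sum_f_R0 (fun i => Rabs (f (d i) - f (c i))) n < eps.

Definition loc_abs_cont (f : R -> R) : Prop :=
  forall a b, a <= b -> abs_cont_on f a b.

Definition null_set (N : R -> Prop) : Prop :=
  forall eps, 0 < eps -> exists a b : nat -> R,
    (forall n, a n <= b n) /\
    (forall x, N x -> exists n, a n < x < b n) /\
    (forall n, sum_f_R0 (fun k => b k - a k) n <= eps).

Definition improper_int (f : R -> R) (l : R) : Prop :=
  (forall a b, a <= b -> exists pr : Riemann_integrable f a b, True) /\
  (forall eps, 0 < eps -> exists M, forall a b (pr : Riemann_integrable f a b),
      a < - M -> M < b -> Rabs (RiemannInt pr - l) < eps).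

(* real part of the Cauchy transform of the measure p(u)du at z = x + iy:
   Re 1/(z-u) = (x-u)/((x-u)^2 + y^2) *)
Definition re_cauchy_integrand (p : R -> R) (x y : R) (u : R) : R :=
  (x - u) / ((x - u) ^ 2 + y ^ 2) * p u.

Definition re_cauchy_transform_is (p : R -> R) (x y l : R) : Prop :=
  improper_int (re_cauchy_integrand p x y) l.

(* Main.v *)
Require Import Defs.
From Stdlib Require Import Reals Lra Lia List Sorted Classical FunctionalExtensionality.
Import ListNotations.
Open Scope R_scope.


Definition lsum {A} (F : A -> R) (l : list A) : R :=
  fold_right (fun x acc => F x + acc) 0 l.

Lemma sum_nth {A} (F : A -> R) (l : list A) (d0 : A) : l <> [] ->
  sum_f_R0 (fun i => F (nth i l d0)) (pred (length l)) = lsum F l.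
Proof.
  induction l as [|a l IH]; [congruence|]. intros _.
  destruct l as [|b l].
  - simpl. lra.
  - change (pred (length (a :: b :: l))) with (length (b :: l)).
    rewrite decomp_sum by (simpl; lia).
    change (lsum F (a :: b :: l)) with (F a + lsum F (b :: l)).
    rewrite <- IH by congruence. reflexivity.
Qed.

Lemma SS_nth {A} (Rel : A -> A -> Prop) (l : list A) d : StronglySorted Rel l ->
  forall i j, (i < j < length l)%nat -> Rel (nth i l d) (nth j l d).
Proof.
  induction l as [|a l IH]; intros H i j Hij; simpl in Hij; [lia|].
  inversion H; subst. destruct i, j; try lia.
  - simpl. rewrite Forall_forall in H3. apply H3. apply nth_In. lia.
  - simpl. apply IH; auto. lia.
Qed.

Definition Rdp (e e' : R * R) : Prop := snd e' <= fst e.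

Lemma AC_list (f : R -> R) a b : abs_cont_on f a b ->
  forall eta, 0 < eta -> exists delta, 0 < delta /\
   forall L : list (R*R), StronglySorted Rdp L ->
     Forall (fun e => a <= fst e /\ fst e <= snd e /\ snd e <= b) L ->
     lsum (fun e => snd e - fst e) L < delta ->
     lsum (fun e => Rabs (f (snd e) - f (fst e))) L < eta.
Proof.
  intros HAC eta Heta. destruct (HAC eta Heta) as [delta [Hd H]].
  exists delta; split; auto. intros L HS HF Hs.
  destruct L as [|e0 L0] eqn:EL.
  - simpl. lra.
  - rewrite <- EL in *. assert (Hne : L <> []) by (rewrite EL; congruence).
    rewrite <- (sum_nth _ L (0,0)) by auto.
    rewrite <- (sum_nth _ L (0,0)) in Hs by auto.
    apply (H (pred (length L)) (fun i => fst (nth i L (0,0))) (fun i => snd (nth i L (0,0)))).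
    + intros i Hi. rewrite Forall_forall in HF. apply HF. apply nth_In.
      destruct L; [congruence|]. simpl in *. lia.
    + intros i j Hi Hj Hij. assert (Hlen : (0 < length L)%nat) by (destruct L; [congruence|simpl;lia]).
      destruct (Nat.lt_ge_cases i j).
      * right. apply (SS_nth _ _ (0,0) HS i j). lia.
      * left. apply (SS_nth _ _ (0,0) HS j i). lia.
    + exact Hs.
Qed.

Definition cc (e : R*R*nat) := fst (fst e).
Definition dd (e : R*R*nat) := snd (fst e).
Definition ix (e : R*R*nat) := snd e.
Definition Rdt (e e' : R*R*nat) : Prop := dd e' <= cc e.
Definition len (e : R*R*nat) := dd e - cc e.

Lemma box A B : A <= B -> forall l, StronglySorted Rdt l ->
  Forall (fun e => A <= cc e /\ cc e <= dd e /\ dd e <= B) l -> lsum len l <= B - A.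
Proof.
  intros HAB l. revert B HAB. induction l as [|e l IH]; intros B HAB HS HF.
  - simpl. lra.
  - inversion HS; subst. inversion HF; subst. simpl.
    assert (lsum len l <= cc e - A).
    { apply IH; auto. lra. rewrite Forall_forall in *. intros x Hx.
      specialize (H4 x Hx). specialize (H2 x Hx). unfold Rdt in H2. lra. }
    unfold len at 1. lra.
Qed.

Lemma lsum_filter {A} (F : A -> R) g l :
  lsum F l = lsum F (filter g l) + lsum F (filter (fun e => negb (g e)) l).
Proof.
  induction l as [|a l IH]; simpl; [lra|].
  destruct (g a); simpl; rewrite IH; lra.
Qed.

Lemma SS_filter {A} (Rel : A -> A -> Prop) g l : StronglySorted Rel l ->
  StronglySorted Rel (filter g l).
Proof.
  induction l as [|a l IH]; intros H; simpl; auto.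
  inversion H; subst. destruct (g a); auto.
  constructor; auto. rewrite Forall_forall in *. intros x Hx.
  apply filter_In in Hx. apply H3; tauto.
Qed.

Lemma Forall_filter' {A} (P : A -> Prop) g l : Forall P l -> Forall P (filter g l).
Proof.
  rewrite !Forall_forall. intros H x Hx. apply filter_In in Hx. apply H; tauto.
Qed.

Lemma grouping (al be : nat -> R) (Hab : forall k, al k <= be k) : forall K l,
  StronglySorted Rdt l ->
  Forall (fun e => cc e <= dd e /\ al (ix e) < cc e /\ dd e < be (ix e) /\ (ix e <= K)%nat) l ->
  lsum len l <= sum_f_R0 (fun k => be k - al k) K.
Proof.
  induction K as [|K IH]; intros l HS HF.
  - simpl. apply box; auto. rewrite Forall_forall in *. intros x Hx.
    destruct (HF x Hx) as (?&?&?&?). assert (ix x = 0%nat) by lia. rewrite H3 in *. lra.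
  - rewrite (lsum_filter len (fun e => Nat.eqb (ix e) (S K))). simpl sum_f_R0.
    assert (lsum len (filter (fun e => Nat.eqb (ix e) (S K)) l) <= be (S K) - al (S K)).
    { apply box; auto. apply SS_filter; auto.
      rewrite Forall_forall in *. intros x Hx. apply filter_In in Hx. destruct Hx as [Hx Heq].
      apply Nat.eqb_eq in Heq. destruct (HF x Hx) as (?&?&?&?). rewrite Heq in *. lra. }
    assert (lsum len (filter (fun e => negb (Nat.eqb (ix e) (S K))) l) <= sum_f_R0 (fun k => be k - al k) K).
    { apply IH. apply SS_filter; auto.
      rewrite Forall_forall in *. intros x Hx. apply filter_In in Hx. destruct Hx as [Hx Heq].
      apply Bool.negb_true_iff, Nat.eqb_neq in Heq. destruct (HF x Hx) as (?&?&?&?).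
      repeat split; auto. lia. }
    lra.
Qed.


Definition Qinv (p : R -> R) a eps (al be : nat -> R) s (L : list (R*R*nat)) : Prop :=
 StronglySorted Rdt L /\
 Forall (fun e => a <= cc e /\ cc e <= dd e /\ dd e <= s /\ al (ix e) < cc e /\ dd e < be (ix e)) L /\
 p s - p a <= eps*(s-a) + lsum (fun e => Rabs (p (dd e) - p (cc e))) L.

Lemma Q_same p a eps al be s' w L : Qinv p a eps al be s' L -> s' <= w ->
  p w - p s' <= eps*(w - s') -> Qinv p a eps al be w L.
Proof.
  intros [H1 [H2 H3]] Hw Hp. split; auto. split.
  - eapply Forall_impl; [|exact H2]. simpl. intros e He. lra.
  - lra.
Qed.

Lemma Q_new p a eps al be s' w L n : Qinv p a eps al be s' L -> a <= s' -> s' <= w ->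
  al n < s' -> w < be n -> 0 <= eps -> Qinv p a eps al be w ((s',w,n)::L).
Proof.
  intros [H1 [H2 H3]] Ha Hw Hal Hbe Heps. split; [|split].
  - constructor; auto. eapply Forall_impl; [|exact H2]. unfold Rdt, cc, dd, ix. simpl. intros e He. lra.
  - constructor. unfold cc, dd, ix; simpl. lra.
    eapply Forall_impl; [|exact H2]. unfold Rdt, cc, dd, ix. simpl. intros e He. lra.
  - change (p w - p a <= eps * (w - a) + (Rabs (p w - p s') + lsum (fun e => Rabs (p (dd e) - p (cc e))) L)).
    assert (p w - p s' <= Rabs (p w - p s')) by apply Rle_abs.
    assert (eps * (s' - a) <= eps * (w - a)) by nra. lra.
Qed.

Lemma deriv_bound p sig l eps : derivable_pt_lim p sig l -> l <= 0 -> 0 < eps ->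
  exists r, 0 < r /\ forall z, Rabs (z - sig) < r ->
   (z <= sig -> p sig - p z <= eps*(sig - z)) /\ (sig <= z -> p z - p sig <= eps*(z - sig)).
Proof.
  intros Hl Hl0 Heps. destruct (Hl eps Heps) as [dl Hdl]. exists dl. split; [apply cond_pos|].
  intros z Hz. destruct (Req_dec z sig) as [->|Hne]; [split; intros; lra|].
  specialize (Hdl (z - sig)). replace (sig + (z - sig)) with z in Hdl by ring.
  assert (Hq := Hdl ltac:(intro; apply Hne; lra) Hz).
  set (q := (p z - p sig)/(z - sig)) in Hq.
  assert (Hpq : p z - p sig = q*(z - sig)) by (unfold q; field; lra).
  apply Rabs_def2 in Hq. split; intro; nra.
Qed.

Lemma lsum_map {A B} (F : B -> R) (f : A -> B) l : lsum F (map f l) = lsum (fun x => F (f x)) l.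
Proof. induction l; simpl; auto. rewrite IHl; auto. Qed.

Lemma SS_map {A B} (Rel : B -> B -> Prop) (f : A -> B) l :
  StronglySorted (fun x y => Rel (f x) (f y)) l -> StronglySorted Rel (map f l).
Proof.
  induction l; intros H; simpl; constructor; inversion H; subst; auto.
  rewrite Forall_forall in *. intros x Hx. apply in_map_iff in Hx. destruct Hx as [y [<- Hy]]. auto.
Qed.

Lemma maxK (l : list (R*R*nat)) : exists K, Forall (fun e => (ix e <= K)%nat) l.
Proof.
  induction l as [|e l [K HK]]. exists 0%nat; constructor.
  exists (Nat.max K (ix e)). constructor. lia.
  eapply Forall_impl; [|exact HK]; intros x Hx; cbv beta in *; lia.
Qed.

Lemma mono_ab p (p_lac : loc_abs_cont p) (N : R -> Prop) (HN : null_set N)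
  (Hd : forall x, 0 < x -> ~ N x -> exists l, derivable_pt_lim p x l /\ l <= 0) a b :
  0 < a -> a <= b -> forall eps eta, 0 < eps -> 0 < eta -> p b - p a <= eps*(b-a) + eta.
Proof.
  intros Ha Hab eps eta Heps Heta.
  destruct (AC_list p a b (p_lac a b Hab) eta Heta) as [delta [Hdel HAC]].
  destruct (HN (delta/2)) as [al [be [Hab' [Hcov Hsum]]]]; [lra|].
  set (S := fun s => a <= s <= b /\ exists L, Qinv p a eps al be s L).
  assert (HSa : S a).
  { split; [lra|]. exists nil. split; [constructor|]. split; [constructor|]. simpl. lra. }
  assert (Hbd: bound S) by (exists b; intros s [Hs _]; lra).
  destruct (completeness S Hbd (ex_intro _ a HSa)) as [sig [Hub Hlub]].
  assert (a <= sig) by (apply Hub; auto).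
  assert (sig <= b) by (apply Hlub; intros s [Hs _]; lra).
  assert (Hclaim: exists r, 0 < r /\ forall s' w L, sig - r < s' <= sig -> sig <= w < sig + r ->
     a <= s' -> Qinv p a eps al be s' L -> exists L', Qinv p a eps al be w L').
  { destruct (classic (N sig)) as [HNs|HNs].
    - destruct (Hcov sig HNs) as [n Hn]. exists (Rmin (sig - al n) (be n - sig)). split.
      + apply Rmin_glb_lt; lra.
      + intros s' w L Hs' Hw Has HQ. exists ((s',w,n)::L).
        pose proof (Rmin_l (sig - al n) (be n - sig)). pose proof (Rmin_r (sig - al n) (be n - sig)).
        apply Q_new; auto; lra.
    - destruct (Hd sig ltac:(lra) HNs) as [l [Hl Hl0]].
      destruct (deriv_bound p sig l eps Hl Hl0 Heps) as [r [Hr Hb]].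
      exists r. split; auto. intros s' w L Hs' Hw Has HQ. exists L.
      apply Q_same with s'; auto; [lra|].
      assert (H1 : p sig - p s' <= eps*(sig - s')) by (apply (Hb s'); [apply Rabs_def1; lra|lra]).
      assert (H2 : p w - p sig <= eps*(w - sig)) by (apply (Hb w); [apply Rabs_def1; lra|lra]).
      lra. }
  destruct Hclaim as [r [Hr Hcl]].
  assert (Hex: exists s', S s' /\ sig - r < s').
  { apply NNPP; intro Hno. assert (sig <= sig - r); [|lra]. apply Hlub. intros s Hs.
    destruct (Rle_or_lt s (sig - r)); auto. exfalso; apply Hno; eauto. }
  destruct Hex as [s' [[Hs'1 [L HL]] Hs'2]].
  assert (s' <= sig) by (apply Hub; split; eauto).
  assert (Hsigb : sig = b).
  { destruct (Req_dec sig b); auto. exfalso.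
    pose proof (Rmin_l b (sig + r/2)). pose proof (Rmin_r b (sig + r/2)).
    assert (Hw : sig < Rmin b (sig + r/2)) by (apply Rmin_glb_lt; lra).
    destruct (Hcl s' (Rmin b (sig + r/2)) L ltac:(lra) ltac:(lra) ltac:(lra) HL) as [L' HL'].
    assert (Rmin b (sig + r/2) <= sig); [|lra]. apply Hub. split; [lra|]. eauto. }
  destruct (Hcl s' sig L ltac:(lra) ltac:(lra) ltac:(lra) HL) as [L' [HS [HF Hineq]]].
  subst sig. destruct (maxK L') as [K HK].
  assert (Hlen: lsum len L' <= delta/2).
  { eapply Rle_trans; [apply (grouping al be Hab' K); auto|apply Hsum].
    rewrite Forall_forall in *. intros x Hx. specialize (HF x Hx). specialize (HK x Hx). simpl in *.
    repeat split; try lra; auto. }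
  assert (Hf : lsum (fun e => Rabs (p (snd e) - p (fst e))) (map fst L') < eta).
  { apply HAC.
    - apply SS_map. exact HS.
    - rewrite Forall_forall in *. intros x Hx. apply in_map_iff in Hx. destruct Hx as [y [<- Hy]].
      specialize (HF y Hy). unfold cc, dd in HF. lra.
    - rewrite lsum_map. unfold len, dd, cc in Hlen. lra. }
  rewrite lsum_map in Hf. unfold dd, cc in Hineq. lra.
Qed.

From Coquelicot Require Import Coquelicot.
Open Scope R_scope.


Definition cont (f : R -> R) := forall u, continuity_pt f u.

Lemma cont_c f u : cont f -> continuous f u.
Proof. intros H. apply continuity_pt_filterlim. apply H. Qed.

Lemma exR f a b : cont f -> ex_RInt f a b.
Proof. intros H. apply (ex_RInt_continuous (V:=R_CompleteNormedModule)). intros; apply cont_c; auto. Qed.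

Lemma RInt_add f g a b : cont f -> cont g ->
  RInt (fun x => f x + g x) a b = RInt f a b + RInt g a b.
Proof. intros. apply (RInt_plus f g); apply exR; auto. Qed.

Lemma RInt_sub f g a b : cont f -> cont g ->
  RInt (fun x => f x - g x) a b = RInt f a b - RInt g a b.
Proof. intros. apply (RInt_minus f g); apply exR; auto. Qed.

Lemma RInt_cmul c f a b : cont f -> RInt (fun x => c * f x) a b = c * RInt f a b.
Proof. intros. apply (RInt_scal f a b c); apply exR; auto. Qed.

Lemma Chasles f a b c : cont f -> RInt f a b + RInt f b c = RInt f a c.
Proof. intros. apply (RInt_Chasles f a b c); apply exR; auto. Qed.

Lemma RInt_swap f a b : cont f -> RInt f b a = - RInt f a b.
Proof. intros. rewrite <- (opp_RInt_swap f a b); [reflexivity|apply exR; auto]. Qed.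

Lemma cont_mult f g : cont f -> cont g -> cont (fun x => f x * g x).
Proof. intros Hf Hg u. apply (continuity_pt_mult f g); auto. Qed.
Lemma cont_plus f g : cont f -> cont g -> cont (fun x => f x + g x).
Proof. intros Hf Hg u. apply (continuity_pt_plus f g); auto. Qed.
Lemma cont_minus f g : cont f -> cont g -> cont (fun x => f x - g x).
Proof. intros Hf Hg u. apply (continuity_pt_minus f g); auto. Qed.
Lemma cont_const c : cont (fun _ => c).
Proof. intros u. apply continuity_pt_const. intros a b; auto. Qed.
Lemma cont_abs f : cont f -> cont (fun x => Rabs (f x)).
Proof. intros Hf u. apply (continuity_pt_comp f Rabs); auto. apply Rcontinuity_abs. Qed.

Lemma RInt_der G g a b : (forall u, is_derive G u (g u)) -> cont g ->
  RInt g a b = G b - G a.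
Proof.
  intros HG Hg. apply is_RInt_unique. apply (is_RInt_derive G g); intros; auto. apply cont_c; auto.
Qed.

Lemma abel_step G g p w v K e : w <= v -> (forall u, is_derive G u (g u)) -> cont g -> cont p ->
  (forall u, w <= u <= v -> Rabs (g u) <= K) ->
  (forall u, w <= u <= v -> Rabs (p u - p v) <= e) ->
  p v * (G v - G w) - K * e * (v - w) <= RInt (fun u => g u * p u) w v.
Proof.
  intros Hwv HG Hg Hp HK He.
  assert (Hc1 : cont (fun u => g u * p u)) by (apply cont_mult; auto).
  assert (Hc2 : cont (fun u => p v * g u)) by (apply cont_mult; auto; apply cont_const).
  assert (E : RInt (fun u => g u * p u - p v * g u) w v = RInt (fun u => g u * p u) w v - p v * (G v - G w)).
  { rewrite RInt_sub; auto. rewrite RInt_cmul; auto. rewrite (RInt_der G g); auto. }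
  assert (B : Rabs (RInt (fun u => g u * p u - p v * g u) w v) <= (v - w) * (K * e)).
  { apply abs_RInt_le_const; auto. apply exR. apply cont_minus; auto.
    intros t Ht. replace (g t * p t - p v * g t) with (g t * (p t - p v)) by ring.
    rewrite Rabs_mult. apply Rmult_le_compat; auto using Rabs_pos. }
  rewrite E in B. apply Rabs_le_between in B. nra.
Qed.

Lemma abel G g p a b : a <= b -> (forall u, is_derive G u (g u)) -> cont g -> cont p ->
  (forall u v, a <= u <= v -> v <= b -> p v <= p u) -> (forall u, a <= u <= b -> 0 <= G u) ->
  p b * G b - p a * G a <= RInt (fun u => g u * p u) a b.
Proof.
  intros Hab HG Hg Hp Hmon HG0.
  destruct (continuity_ab_maj (fun u => Rabs (g u)) a b Hab) as [Mx [HMx _]].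
  { intros c _. apply cont_abs; auto. }
  set (K := Rabs (g Mx) + 1).
  assert (HK : forall u, a <= u <= b -> Rabs (g u) <= K) by (intros u Hu; specialize (HMx u Hu); unfold K; lra).
  assert (HKp : 0 < K) by (unfold K; pose proof (Rabs_pos (g Mx)); lra).
  apply Rnot_lt_le. intro Hlt.
  set (eps := (p b * G b - p a * G a - RInt (fun u => g u * p u) a b)).
  assert (Heps : 0 < eps) by (unfold eps; lra).
  set (e := eps / (2 * K * (b - a + 1))).
  assert (He : 0 < e) by (unfold e; apply Rdiv_lt_0_compat; [lra|]; apply Rmult_lt_0_compat; lra).
  destruct (Heine_cor2 (f:=p) (a:=a) (b:=b) (fun x _ => Hp x) (mkposreal e He)) as [dl Hdl].
  simpl in Hdl.
  assert (Hc1 : cont (fun u => g u * p u)) by (apply cont_mult; auto).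
  assert (Hind : forall n : nat, forall v, a <= v <= b -> v - a <= INR n * (dl / 2) ->
     p v * G v - p a * G a - K * e * (v - a) <= RInt (fun u => g u * p u) a v).
  { induction n as [|n IH]; intros v Hv Hvn.
    - simpl in Hvn. assert (v = a) by lra. subst v. rewrite RInt_point. unfold zero; simpl. lra.
    - set (w := Rmax a (v - dl / 2)).
      pose proof (Rmax_l a (v - dl/2)). pose proof (Rmax_r a (v - dl/2)).
      pose proof (cond_pos dl).
      assert (Hw : w <= v) by (unfold w; apply Rmax_lub; lra).
      assert (Hwn : w - a <= INR n * (dl / 2)).
      { unfold w, Rmax. destruct (Rle_dec a (v - dl/2)).
        - rewrite S_INR in Hvn. lra.
        - pose proof (pos_INR n). nra. }
      assert (Haw : a <= w) by (unfold w; apply Rmax_l). assert (Hvw : v - dl/2 <= w) by (unfold w; apply Rmax_r). specialize (IH w ltac:(lra) Hwn).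
      assert (Hs := abel_step G g p w v K e Hw HG Hg Hp).
      specialize (Hs ltac:(intros; apply HK; lra)).
      specialize (Hs ltac:(intros u Hu; apply Rlt_le; apply Hdl; try lra; apply Rabs_def1; lra)).
      rewrite <- (Chasles _ a w v Hc1).
      assert (0 <= G w * (p w - p v)).
      { apply Rmult_le_pos. apply HG0; lra. assert (p v <= p w) by (apply Hmon; lra). lra. }
      nra. }
  destruct (INR_archimed (dl/2) (b - a)) as [n Hn]. { pose proof (cond_pos dl). lra. }
  specialize (Hind n b ltac:(lra) ltac:(lra)).
  assert (K * e * (b - a) <= eps / 2).
  { unfold e. apply (Rmult_le_reg_r (2 * (b - a + 1))). lra. field_simplify; lra. }
  unfold eps in *. lra.
Qed.


Lemma lac_cont p : loc_abs_cont p -> cont p.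
Proof.
  intros H u. unfold continuity_pt, continue_in, limit1_in, limit_in. intros eps Heps.
  destruct (H (u-1) (u+1) ltac:(lra) eps Heps) as [d [Hd Hc]].
  exists (Rmin 1 d). split; [apply Rmin_pos; lra|]. intros z [_ Hz]. simpl in *. unfold Rdist in *.
  pose proof (Rmin_l 1 d). pose proof (Rmin_r 1 d).
  apply Rabs_def2 in Hz.
  destruct (Rle_dec u z).
  - specialize (Hc 0%nat (fun _ => u) (fun _ => z)). simpl in Hc. apply Hc.
    + intros; lra.
    + intros; lia.
    + lra.
  - specialize (Hc 0%nat (fun _ => z) (fun _ => u)). simpl in Hc. rewrite Rabs_minus_sym. apply Hc.
    + intros; lra.
    + intros; lia.
    + lra.
Qed.

Lemma cont_eps f x : continuity_pt f x -> forall eps, 0 < eps -> exists alp, 0 < alp /\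
  forall z, Rabs (z - x) < alp -> Rabs (f z - f x) < eps.
Proof.
  intros H eps Heps. destruct (H eps Heps) as [alp [Ha Hz]]. exists alp. split; auto.
  intros z Hzx. destruct (Req_dec z x) as [->|Hne].
  - rewrite Rminus_eq_0, Rabs_R0. auto.
  - apply (Hz z). split; [split; [exact I|auto]|]. simpl. exact Hzx.
Qed.

Lemma mono_pos p (p_lac : loc_abs_cont p)
  (p_decr : exists N : R -> Prop, null_set N /\
      forall x, 0 < x -> ~ N x -> exists l, derivable_pt_lim p x l /\ l <= 0) :
  forall a b, 0 < a -> a <= b -> p b <= p a.
Proof.
  destruct p_decr as [N [HN Hd]]. intros a b Ha Hab.
  apply Rnot_lt_le. intro Hlt. set (D := p b - p a).
  assert (HD : 0 < D) by (unfold D; lra).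
  assert (Hm := mono_ab p p_lac N HN Hd a b Ha Hab (D / (2*(b-a+1))) (D/4)).
  assert (0 < D / (2*(b-a+1))) by (apply Rdiv_lt_0_compat; lra).
  specialize (Hm ltac:(lra) ltac:(lra)).
  assert (D / (2*(b-a+1)) * (b - a) <= D/2).
  { apply (Rmult_le_reg_r (2 * (b - a + 1))). lra. field_simplify; lra. }
  unfold D in *. lra.
Qed.

Lemma mono0 p (p_lac : loc_abs_cont p)
  (p_decr : exists N : R -> Prop, null_set N /\
      forall x, 0 < x -> ~ N x -> exists l, derivable_pt_lim p x l /\ l <= 0) :
  forall a b, 0 <= a -> a <= b -> p b <= p a.
Proof.
  intros a b Ha Hab. destruct (Req_dec a 0) as [->|Hne].
  - destruct (Req_dec b 0) as [->|Hb]; [lra|].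
    apply Rnot_lt_le. intro Hlt.
    destruct (cont_eps p 0 (lac_cont p p_lac 0) (p b - p 0) ltac:(lra)) as [alp [Halp Hc]].
    set (z := Rmin (alp/2) b).
    assert (0 < z) by (unfold z; apply Rmin_glb_lt; lra).
    assert (z <= b) by (unfold z; apply Rmin_r).
    assert (z <= alp/2) by (unfold z; apply Rmin_l).
    assert (p b <= p z) by (apply mono_pos; auto).
    specialize (Hc z ltac:(rewrite Rminus_0_r, Rabs_pos_eq; lra)).
    apply Rabs_def2 in Hc. lra.
  - apply mono_pos; auto. lra.
Qed.


Definition kk x y u := (x - u) / ((x - u) ^ 2 + y ^ 2).

Lemma cont_of_der f : (forall u, ex_derive f u) -> cont f.
Proof. intros H u. apply continuity_pt_filterlim. apply (ex_derive_continuous (K:=R_AbsRing) (V:=R_NormedModule)). apply H. Qed.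

Lemma kk_cont x y : 0 < y -> cont (kk x y).
Proof.
  intros Hy. apply cont_of_der. intros u. unfold kk. auto_derive. apply Rgt_not_eq. apply Rplus_le_lt_0_compat. rewrite Rmult_1_r. apply Rle_0_sqr. rewrite Rmult_1_r. apply Rmult_lt_0_compat; lra.
Qed.

Lemma cont_comp_opp f : cont f -> cont (fun u => f (- u)).
Proof.
  intros H u. apply (continuity_pt_comp (fun u => - u) f).
  - apply (continuity_pt_opp (fun x => x)). apply continuity_pt_id.
  - apply H.
Qed.

Lemma kk_bound x y u : 0 < y -> Rabs (kk x y u) <= / (2 * y).
Proof.
  intros Hy. unfold kk. set (t := Rabs (x - u)).
  assert (Ht : 0 <= t) by apply Rabs_pos.
  assert (Hq : (x - u) ^ 2 + y ^ 2 = t ^ 2 + y ^ 2) by (unfold t; rewrite pow2_abs; auto).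
  rewrite Hq. rewrite Rabs_div by nra. rewrite (Rabs_pos_eq (t^2+y^2)) by nra. fold t.
  assert (E : / (2 * y) - t / (t ^ 2 + y ^ 2) = (t - y) ^ 2 / (2 * y * (t ^ 2 + y ^ 2))) by (field; nra).
  assert (0 <= (t - y) ^ 2 / (2 * y * (t ^ 2 + y ^ 2))).
  { unfold Rdiv. apply Rmult_le_pos. apply pow2_ge_0. left. apply Rinv_0_lt_compat. apply Rmult_lt_0_compat; [lra|]. pose proof (pow2_ge_0 t). pose proof (pow_lt y 2 Hy). lra. }
  lra.
Qed.

Lemma f_cont p x y : 0 < y -> cont p -> cont (re_cauchy_integrand p x y).
Proof.
  intros Hy Hp. change (cont (fun u => kk x y u * p u)). apply cont_mult; auto. apply kk_cont; auto.
Qed.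

Lemma RInt_f_bound p x y : 0 < y -> cont p -> (forall u, 0 <= p u) -> forall u v,
  Rabs (RInt (re_cauchy_integrand p x y) u v) <= / (2 * y) * Rabs (RInt p u v).
Proof.
  intros Hy Hp Hnn.
  assert (Hf := f_cont p x y Hy Hp).
  assert (Hy' : 0 < / (2 * y)) by (apply Rinv_0_lt_compat; lra).
  assert (Hle : forall u v, u <= v -> Rabs (RInt (re_cauchy_integrand p x y) u v) <= / (2 * y) * Rabs (RInt p u v)).
  { intros u v Huv.
    eapply Rle_trans. apply abs_RInt_le; auto. apply exR; auto.
    assert (0 <= RInt p u v) by (apply RInt_ge_0; auto; apply exR; auto).
    rewrite (Rabs_pos_eq (RInt p u v)) by auto.
    rewrite <- RInt_cmul by auto.
    apply RInt_le; auto. apply exR, cont_abs; auto. apply exR. apply cont_mult; auto. apply cont_const.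
    intros z _. change (Rabs (kk x y z * p z) <= / (2 * y) * p z).
    rewrite Rabs_mult, (Rabs_pos_eq (p z)) by auto. apply Rmult_le_compat_r; auto. apply kk_bound; auto. }
  intros u v. destruct (Rle_dec u v). auto.
  rewrite (RInt_swap _ v u) by auto. rewrite (RInt_swap p v u) by auto. rewrite !Rabs_Ropp.
  apply Hle. lra.
Qed.

Lemma prob_RInt p : cont p -> improper_int p 1 -> forall eps, 0 < eps -> exists M, 0 < M /\
  forall a b, a < - M -> M < b -> Rabs (RInt p a b - 1) < eps.
Proof.
  intros Hp [_ H] eps Heps. destruct (H eps Heps) as [M HM]. exists (Rabs M + 1).
  pose proof (Rabs_pos M). pose proof (Rle_abs M). pose proof (Rle_abs (- M)). rewrite Rabs_Ropp in *.
  split; [lra|]. intros a b Ha Hb.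
  assert (pr := @continuity_implies_RiemannInt p a b ltac:(lra) (fun x _ => Hp x)).
  rewrite (RInt_Reals p a b pr). apply HM; lra.
Qed.

Lemma tails_p p : cont p -> improper_int p 1 -> forall eps, 0 < eps -> exists M, 0 < M /\
  forall a a' b b', a < - M -> a' < - M -> M < b -> M < b' ->
  Rabs (RInt p a b - RInt p a' b') < eps.
Proof.
  intros Hp H eps Heps. destruct (prob_RInt p Hp H (eps/2) ltac:(lra)) as [M [HM HMM]].
  exists M. split; auto. intros a a' b b' Ha Ha' Hb Hb'.
  specialize (HMM a b Ha Hb) as H1. specialize (HMM a' b' Ha' Hb') as H2.
  apply Rabs_def2 in H1. apply Rabs_def2 in H2. apply Rabs_def1; lra.
Qed.

Lemma tails_f p x y : 0 < y -> cont p -> (forall u, 0 <= p u) -> improper_int p 1 ->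
  forall eps, 0 < eps -> exists M, 0 < M /\
  forall a a' b b', a < - M -> a' < - M -> M < b -> M < b' ->
  Rabs (RInt (re_cauchy_integrand p x y) a b - RInt (re_cauchy_integrand p x y) a' b') < eps.
Proof.
  intros Hy Hp Hnn H eps Heps.
  set (C := / (2 * y)). assert (HC : 0 < C) by (apply Rinv_0_lt_compat; lra).
  destruct (tails_p p Hp H (eps / (2 * C + 1))) as [M [HM HMM]].
  { apply Rdiv_lt_0_compat; lra. }
  exists M. split; auto. intros a a' b b' Ha Ha' Hb Hb'.
  set (f := re_cauchy_integrand p x y).
  assert (Hf : cont f) by (apply f_cont; auto).
  rewrite <- (Chasles f a a' b Hf). rewrite <- (Chasles f a' b' b Hf).
  assert (E1 : RInt p a a' = RInt p a b - RInt p a' b) by (pose proof (Chasles p a a' b Hp); lra).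
  assert (E2 : RInt p b' b = RInt p a' b - RInt p a' b') by (pose proof (Chasles p a' b' b Hp); lra).
  assert (B1 := RInt_f_bound p x y Hy Hp Hnn a a'). assert (B2 := RInt_f_bound p x y Hy Hp Hnn b' b).
  fold f C in B1, B2. rewrite E1 in B1. rewrite E2 in B2.
  specialize (HMM a a' b b Ha Ha' Hb Hb) as H1. specialize (HMM a' a' b b' Ha' Ha' Hb Hb') as H2.
  assert (Hs : C * (eps / (2 * C + 1)) * 2 < eps).
  { apply (Rmult_lt_reg_r (2 * C + 1)). lra. field_simplify; lra. }
  replace (RInt f a a' + (RInt f a' b' + RInt f b' b) - RInt f a' b') with (RInt f a a' + RInt f b' b) by ring.
  eapply Rle_lt_trans. apply Rabs_triang.
  assert (C * Rabs (RInt p a b - RInt p a' b) <= C * (eps / (2 * C + 1))) by (apply Rmult_le_compat_l; lra).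
  assert (C * Rabs (RInt p a' b - RInt p a' b') <= C * (eps / (2 * C + 1))) by (apply Rmult_le_compat_l; lra).
  lra.
Qed.


Definition hh x y u := kk x y u + kk x y (- u).
Definition HH x y u := (ln ((x + u) ^ 2 + y ^ 2) - ln ((x - u) ^ 2 + y ^ 2)) / 2.

Lemma sq_pos a y : 0 < y -> 0 < a * (a * 1) + y * (y * 1).
Proof. intros. rewrite !Rmult_1_r. pose proof (Rle_0_sqr a). unfold Rsqr in *. nra. Qed.

Lemma sq_pos' a y : 0 < y -> 0 < a ^ 2 + y ^ 2.
Proof. intros. simpl. apply sq_pos; auto. Qed.

Lemma HH_der x y : 0 < y -> forall u : R, is_derive (HH x y) u (hh x y u).
Proof.
  intros Hy u. unfold HH, hh, kk. auto_derive.
  - split; [apply sq_pos; auto|split; [apply sq_pos; auto|exact I]].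
  - pose proof (sq_pos (x + u) y Hy). pose proof (sq_pos (x + - u) y Hy).
    field. split; apply Rgt_not_eq; apply sq_pos'; auto.
Qed.

Lemma hh_cont x y : 0 < y -> cont (hh x y).
Proof.
  intros Hy. change (cont (fun u => kk x y u + kk x y (- u))). apply cont_plus.
  apply kk_cont; auto. apply (cont_comp_opp (kk x y)). apply kk_cont; auto.
Qed.

Lemma HH0 x y : HH x y 0 = 0.
Proof. unfold HH. rewrite Rplus_0_r, Rminus_0_r. lra. Qed.

Lemma HH_nonneg x y u : 0 < x -> 0 < y -> 0 <= u -> 0 <= HH x y u.
Proof.
  intros Hx Hy Hu. unfold HH.
  assert (ln ((x - u) ^ 2 + y ^ 2) <= ln ((x + u) ^ 2 + y ^ 2)).
  { apply ln_le. apply sq_pos'; auto. simpl. nra. }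
  lra.
Qed.

Definition cH x y s t := ln (1 + 4 * x * s / ((x + t) ^ 2 + y ^ 2)) / 2.

Lemma cH_pos x y s t : 0 < x -> 0 < y -> 0 < s -> 0 < cH x y s t.
Proof.
  intros Hx Hy Hs. unfold cH. assert (0 < 4 * x * s / ((x + t) ^ 2 + y ^ 2)).
  { apply Rdiv_lt_0_compat. nra. apply sq_pos'; auto. }
  assert (ln 1 < ln (1 + 4 * x * s / ((x + t) ^ 2 + y ^ 2))) by (apply ln_increasing; lra).
  rewrite ln_1 in H0. lra.
Qed.

Lemma HH_lower x y s t u : 0 < x -> 0 < y -> 0 < s -> s <= u <= t -> cH x y s t <= HH x y u.
Proof.
  intros Hx Hy Hs Hu. unfold cH, HH.
  set (A := (x - u) ^ 2 + y ^ 2). set (D := (x + t) ^ 2 + y ^ 2).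
  assert (HA : 0 < A) by (apply sq_pos'; auto). assert (HD : 0 < D) by (apply sq_pos'; auto).
  assert (EB : (x + u) ^ 2 + y ^ 2 = A + 4 * x * u) by (unfold A; ring).
  assert (HAD : A <= D).
  { assert (0 <= (t + u) * (2*x + t - u)) by (apply Rmult_le_pos; lra).
    assert (E : D - A = (t+u)*(2*x+t-u)) by (unfold A, D; ring). lra. }
  assert (0 <= 4 * x * u) by nra. rewrite EB. rewrite <- ln_div by lra.
  assert (1 + 4 * x * s / D <= (A + 4 * x * u) / A).
  { replace ((A + 4 * x * u) / A) with (1 + 4 * x * u / A) by (field; lra).
    apply Rplus_le_compat_l. apply Rle_trans with (4 * x * u / D).
    - unfold Rdiv. apply Rmult_le_compat_r. left; apply Rinv_0_lt_compat; auto. nra.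
    - unfold Rdiv. apply Rmult_le_compat_l. nra. apply Rinv_le_contravar; auto. }
  assert (0 < 1 + 4 * x * s / D).
  { assert (0 < 4 * x * s / D) by (apply Rdiv_lt_0_compat; nra). lra. }
  assert (ln (1 + 4 * x * s / D) <= ln ((A + 4 * x * u) / A)) by (apply ln_le; auto).
  lra.
Qed.

Lemma der_sub_const (G : R -> R) (u d c : R) : is_derive G u d -> is_derive (fun v => G v - c) u d.
Proof.
  intros H. pose proof (is_derive_minus G (fun _ => c) u d zero H (is_derive_const c u)) as H2.
  unfold minus, plus, opp, zero in H2; simpl in H2.
  rewrite Ropp_0, Rplus_0_r in H2. exact H2.
Qed.

Lemma pos_main p x y s t : 0 < x -> 0 < y -> cont p -> (forall u, 0 <= p u) ->
  (forall a b, 0 <= a -> a <= b -> p b <= p a) -> 0 < s -> s < t ->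
  forall T, t <= T -> cH x y s t * (p s - p t) <= RInt (fun u => hh x y u * p u) 0 T.
Proof.
  intros Hx Hy Hp Hnn Hmon Hs Hst T HT.
  assert (Hg := hh_cont x y Hy). assert (HG := HH_der x y Hy).
  assert (Hgp : cont (fun u => hh x y u * p u)) by (apply cont_mult; auto).
  set (c := cH x y s t).
  assert (A1 := abel (HH x y) (hh x y) p 0 s ltac:(lra) HG Hg Hp
     ltac:(intros u v Huv Hv; apply Hmon; lra) ltac:(intros u Hu; apply HH_nonneg; lra)).
  assert (A2 := abel (fun u => HH x y u - c) (hh x y) p s t ltac:(lra)
     ltac:(intros u; apply der_sub_const; auto) Hg Hp
     ltac:(intros u v Huv Hv; apply Hmon; lra)
     ltac:(intros u Hu; assert (c <= HH x y u) by (apply HH_lower; lra); lra)).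
  assert (A3 := abel (HH x y) (hh x y) p t T ltac:(lra) HG Hg Hp
     ltac:(intros u v Huv Hv; apply Hmon; lra) ltac:(intros u Hu; apply HH_nonneg; lra)).
  rewrite <- (Chasles _ 0 s T Hgp). rewrite <- (Chasles _ s t T Hgp).
  rewrite HH0 in A1.
  assert (0 <= p T * HH x y T) by (apply Rmult_le_pos; auto; apply HH_nonneg; lra).
  nra.
Qed.


Lemma decomp p x y T : 0 < y -> cont p -> (forall u, p u = p (- u)) ->
  RInt (re_cauchy_integrand p x y) (- T) T = RInt (fun u => hh x y u * p u) 0 T.
Proof.
  intros Hy Hp Hev. set (f := re_cauchy_integrand p x y).
  assert (Hf : cont f) by (apply f_cont; auto).
  assert (Hfo : cont (fun u => f (- u))) by (apply cont_comp_opp; auto).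
  rewrite <- (Chasles f (- T) 0 T Hf).
  assert (E : RInt f (- T) 0 = RInt (fun u => f (- u)) 0 T).
  { pose proof (RInt_comp_lin f (-1) 0 0 T (exR f _ _ Hf)) as H.
    replace (-1 * 0 + 0) with 0 in H by ring. replace (-1 * T + 0) with (- T) in H by ring.
    rewrite (RInt_swap f (- T) 0 Hf) in H.
    rewrite (RInt_ext _ (fun u => -1 * f (- u))) in H.
    - rewrite RInt_cmul in H by auto. lra.
    - intros z _. unfold scal; simpl; unfold mult; simpl. f_equal. f_equal. ring. }
  rewrite E. rewrite <- RInt_add by auto. apply RInt_ext. intros z _.
  unfold f, re_cauchy_integrand, hh, kk. rewrite <- (Hev z). rewrite Rmult_plus_distr_r, Rplus_comm. reflexivity.
Qed.

Lemma exists_s p : cont p -> (forall u, 0 <= p u) -> (forall u, p u = p (- u)) ->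
  improper_int p 1 -> exists s, 0 < s /\ 0 < p s.
Proof.
  intros Hp Hnn Hev Hprob. apply NNPP. intro Hno.
  assert (Hz : forall u, 0 < u -> p u = 0).
  { intros u Hu. destruct (Hnn u) as [Hlt|Heq]; auto. exfalso. apply Hno. eauto. }
  assert (Hz0 : p 0 = 0).
  { destruct (Hnn 0) as [Hlt|Heq]; auto. exfalso.
    destruct (cont_eps p 0 (Hp 0) (p 0) Hlt) as [alp [Halp Hc]].
    specialize (Hc (alp/2) ltac:(rewrite Rminus_0_r, Rabs_pos_eq; lra)).
    rewrite Hz in Hc by lra. rewrite Rminus_0_l, Rabs_Ropp, Rabs_pos_eq in Hc; lra. }
  assert (Hall : forall u, p u = 0).
  { intros u. destruct (Rtotal_order u 0) as [H|[H|H]].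
    - rewrite Hev. apply Hz. lra.
    - subst; auto.
    - apply Hz; auto. }
  destruct (prob_RInt p Hp Hprob (1/2) ltac:(lra)) as [M [HM HMM]].
  specialize (HMM (- M - 1) (M + 1) ltac:(lra) ltac:(lra)).
  rewrite (RInt_ext p (fun _ => 0)) in HMM by (intros; apply Hall).
  rewrite RInt_const in HMM. unfold scal in HMM; simpl in HMM; unfold mult in HMM; simpl in HMM.
  rewrite Rmult_0_r in HMM. rewrite Rminus_0_l, Rabs_Ropp, Rabs_R1 in HMM. lra.
Qed.

Lemma exists_t p s : (forall u, 0 <= p u) -> 0 < s -> 0 < p s ->
  (forall eps, 0 < eps -> exists M, forall x, M < x -> Rabs (p x * ln x) < eps) ->
  exists t, s < t /\ p t < p s.
Proof.
  intros Hnn Hs Hps Hlog. destruct (Hlog (p s) Hps) as [M HM].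
  set (t := Rmax M s + 3). pose proof (Rmax_l M s). pose proof (Rmax_r M s).
  exists t. split; [unfold t; lra|].
  specialize (HM t ltac:(unfold t; lra)).
  assert (Hl : 1 <= ln t).
  { rewrite <- (ln_exp 1) at 1. apply ln_le. apply exp_pos. pose proof exp_le_3. unfold t. lra. }
  pose proof (Rle_abs (p t * ln t)). pose proof (Hnn t).
  assert (p t <= p t * ln t) by nra. lra.
Qed.

Theorem lemma3 (p : R -> R)
  (p_nonneg : forall x, 0 <= p x)
  (p_prob : improper_int p 1)
  (p_lac : loc_abs_cont p)
  (p_even : forall x, p x = p (- x))
  (p_decr : exists N : R -> Prop, null_set N /\
      forall x, 0 < x -> ~ N x -> exists l, derivable_pt_lim p x l /\ l <= 0)
  (p_log : forall eps, 0 < eps -> exists M, forall x, M < x ->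
      Rabs (p x * ln x) < eps) :
  forall x y, 0 < x -> 0 < y ->
    exists l, re_cauchy_transform_is p x y l /\ 0 < l.
Proof.
  intros x y Hx Hy.
  assert (pc := lac_cont p p_lac). assert (mon := mono0 p p_lac p_decr).
  set (f := re_cauchy_integrand p x y).
  assert (Hf : cont f) by (apply f_cont; auto).
  set (I := fun n : nat => RInt f (- INR n) (INR n)).
  assert (Hc : Cauchy_crit I).
  { intros eps Heps. destruct (tails_f p x y Hy pc p_nonneg p_prob eps Heps) as [M [HM HT]].
    destruct (INR_unbounded M) as [N HN]. exists N. intros n m Hn Hm.
    apply le_INR in Hn. apply le_INR in Hm. unfold Rdist, I. apply HT; lra. }
  destruct (Rcomplete.R_complete I Hc) as [l Hl].
  exists l. split.
  - split.
    + intros a b Hab. exists (@continuity_implies_RiemannInt f a b Hab (fun z _ => Hf z)). auto.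
    + intros eps Heps.
      destruct (tails_f p x y Hy pc p_nonneg p_prob (eps/2) ltac:(lra)) as [M [HM HT]].
      destruct (Hl (eps/2) ltac:(lra)) as [N1 HN1].
      destruct (INR_unbounded M) as [N2 HN2].
      exists M. intros a b pr Ha Hb. rewrite <- (RInt_Reals _ a b pr).
      set (n := Nat.max N1 N2).
      assert (INR N2 <= INR n) by (apply le_INR; lia).
      specialize (HN1 n ltac:(lia)). unfold Rdist, I in HN1.
      specialize (HT a (- INR n) b (INR n) Ha ltac:(lra) Hb ltac:(lra)).
      apply Rabs_def2 in HN1. apply Rabs_def2 in HT. unfold f in *. apply Rabs_def1; lra.
  - destruct (exists_s p pc p_nonneg p_even p_prob) as [s [Hs Hps]].
    destruct (exists_t p s p_nonneg Hs Hps p_log) as [t [Hst Hpt]].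
    set (m0 := cH x y s t * (p s - p t)).
    assert (Hm0 : 0 < m0) by (apply Rmult_lt_0_compat; [apply cH_pos; auto|lra]).
    assert (HI : forall n, t <= INR n -> m0 <= I n).
    { intros n Hn. unfold I, f. rewrite decomp; auto. apply pos_main; auto. }
    destruct (Hl (m0/2) ltac:(lra)) as [N1 HN1].
    destruct (INR_unbounded t) as [N2 HN2].
    set (n := Nat.max N1 N2).
    assert (INR N2 <= INR n) by (apply le_INR; lia).
    specialize (HN1 n ltac:(lia)). unfold Rdist in HN1. specialize (HI n ltac:(lra)).
    apply Rabs_def2 in HN1. lra.
Qed.
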